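(* For every $n\ge 3$, $\lceil \log_2 n\rceil\le \mathrm{isat}(n,\bowtie)\le \binom{n}{2}+2n-1$.
   Context: $\mathcal{B}_n$ denotes the Boolean lattice $(2^{[n]},\subseteq)$. A family $\mathcal{F}\subseteq 2^{[n]}$ (ordered by inclusion) is induced-$\mathcal{P}$-saturated if it contains no induced copy of $\mathcal{P}$ (an injection $f$ with $u\le v\iff f(u)\subseteq f(v)$) but every family $\mathcal{F}'$ with $\mathcal{F}\subsetneq\mathcal{F}'\subseteq 2^{[n]}$ contains one. $\mathrm{isat}(n,\mathcal{P})$ is the minimum size of an induced-$\mathcal{P}$-saturated family in $\mathcal{B}_n$. The butterfly $\bowtie$ is the four-element poset on $\{A,B,C,D\}$ whose only strict relations are $A<B$, $A<D$, $C<B$, $C<D$ (so $A\parallel C$ and $B\parallel D$). *)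

(* Defs.v *)
From mathcomp Require Import all_boot.
Set Implicit Arguments. Unset Strict Implicit. Unset Printing Implicit Defensive.

(* The butterfly poset on 'I_4: A = 0, B = 1, C = 2, D = 3.
   Strict relations: A<B, A<D, C<B, C<D. *)
Definition bfly_bottom (u : 'I_4) : bool := (val u == 0) || (val u == 2).
Definition bfly_top (u : 'I_4) : bool := (val u == 1) || (val u == 3).
Definition bfly_le (u v : 'I_4) : bool := (u == v) || (bfly_bottom u && bfly_top v).

Definition family (n : nat) := {set {set 'I_n}}.

Definition has_induced_bfly (n : nat) (F : family n) : bool :=
  [exists f : {ffun 'I_4 -> {set 'I_n}},
     [&& injectiveb f, [forall u, f u \in F] &
         [forall u, forall v, bfly_le u v == (f u \subset f v)]]].

Definition bfly_saturated (n : nat) (F : family n) : bool :=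
  ~~ has_induced_bfly F &&
  [forall F' : family n, (F \proper F') ==> has_induced_bfly F'].

(* The default
   value (2^n).+1 is never attained since saturated families always exist
   (any inclusion-maximal butterfly-free family is saturated). *)
Definition isat_bfly (n : nat) : nat :=
  \big[minn/(2 ^ n).+1]_(F : family n | bfly_saturated F) #|F|.

(* Main.v *)
Require Import Defs.
From mathcomp Require Import all_boot.
Set Implicit Arguments. Unset Strict Implicit. Unset Printing Implicit Defensive.

Definition bf (n : nat) (F : Defs.family n) (A B C D : {set 'I_n}) : Prop :=
  [/\ [/\ A \in F, B \in F, C \in F & D \in F],
      [/\ A \subset B, A \subset D, C \subset B & C \subset D] &
      [/\ ~~ (A \subset C), ~~ (C \subset A), ~~ (B \subset D) & ~~ (D \subset B)]].

Definition mk4 n (A B C D : {set 'I_n}) : {ffun 'I_4 -> {set 'I_n}} :=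
  [ffun u : 'I_4 => nth set0 [:: A; B; C; D] u].

Lemma bflyP n (F : Defs.family n) :
  has_induced_bfly F <-> exists A B C D, bf F A B C D.
Proof.
split.
  case/existsP=> f /and3P[_ /forallP fF /forallP fle].
  have le u v : bfly_le u v = (f u \subset f v) by apply/eqP; have := fle u => /forallP.
  exists (f (Ordinal (isT : 0 < 4))), (f (Ordinal (isT : 1 < 4))),
         (f (Ordinal (isT : 2 < 4))), (f (Ordinal (isT : 3 < 4))).
  by split; [split|split|split]; rewrite ?fF // -le.
move=> [A [B [C [D [[FA FB FC FD] [AB AD CB CD] [nAC nCA nBD nDB]]]]]].
have nBA : ~~ (B \subset A) by apply: contra nBD => /subset_trans; apply.
have nDA : ~~ (D \subset A) by apply: contra nDB => /subset_trans; apply.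
have nBC : ~~ (B \subset C) by apply: contra nBD => /subset_trans; apply.
have nDC : ~~ (D \subset C) by apply: contra nDB => /subset_trans; apply.
have hle : forall u v, bfly_le u v = (mk4 A B C D u \subset mk4 A B C D v).
  move=> [[|[|[|[|u]]]] hu] [[|[|[|[|v]]]] hv] //; rewrite /mk4 !ffunE /bfly_le /=;
    by rewrite ?subxx ?AB ?AD ?CB ?CD ?(negbTE nAC) ?(negbTE nCA) ?(negbTE nBD) ?(negbTE nDB)
      ?(negbTE nBA) ?(negbTE nDA) ?(negbTE nBC) ?(negbTE nDC).
apply/existsP; exists (mk4 A B C D); apply/and3P; split.
- apply/injectiveP=> u v e.
  have h1 : bfly_le u v by rewrite hle e.
  have h2 : bfly_le v u by rewrite hle e.
  by move: u v h1 h2 {e} => [[|[|[|[|u]]]] hu] [[|[|[|[|v]]]] hv] //; rewrite /bfly_le /=;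
    move=> *; apply/val_inj.
- by apply/forallP=> -[[|[|[|[|u]]]] hu]; rewrite /mk4 ffunE.
- by apply/forallP=> u; apply/forallP=> v; rewrite hle.
Qed.

Lemma sat_props n (F : Defs.family n) : bfly_saturated F ->
  (forall A B C D, ~ bf F A B C D) /\
  (forall X, X \notin F -> exists A B C D, bf (X |: F) A B C D).
Proof.
case/andP=> nb /forallP sat; split.
  by move=> A B C D h; apply: (negP nb); apply/bflyP; exists A, B, C, D.
move=> X XF; apply/bflyP; have := sat (X |: F); by rewrite properUr ?sub1set.
Qed.

Lemma bf_swapAC n (F : Defs.family n) A B C D : bf F A B C D -> bf F C B A D.
Proof. by case=> -[????] [????] [????]; split; split. Qed.
Lemma bf_swapBD n (F : Defs.family n) A B C D : bf F A B C D -> bf F A D C B.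
Proof. by case=> -[????] [????] [????]; split; split. Qed.

Lemma twin_lemma n (F : Defs.family n) (i j : 'I_n) : bfly_saturated F -> i != j ->
  (forall S, S \in F -> (i \in S) = (j \in S)) -> False.
Proof.
move=> sat ij tw; have [nbf satX] := sat_props sat.
have key : forall X, X \notin F ->
   (forall C B D, C \in F -> B \in F -> D \in F -> ~ bf (X |: F) X B C D) ->
   (forall A C D, A \in F -> C \in F -> D \in F -> ~ bf (X |: F) A X C D) -> False.
  move=> X XF hbot htop; have [A [B [C [D h]]]] := satX X XF.
  have h' := h; case: h' => -[] /setU1P[eA|FA] /setU1P[eB|FB] /setU1P[eC|FC] /setU1P[eD|FD]
     [AB AD CB CD] [nAC nCA nBD nDB]; subst;
   rewrite ?subxx // in AB AD CB CD nAC nCA nBD nDB.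
  all: try match goal with H : is_true ?a, H' : is_true (~~ ?a) |- _ => by rewrite H in H' end.
  all: try match goal with H' : is_true (~~ true) |- _ => by [] end.
  all: try by apply: (hbot C B D).
  all: try by apply: (htop A C D).
  all: try by apply: (hbot A B D) => //; apply: bf_swapAC.
  all: try by apply: (htop A C B) => //; apply: bf_swapBD.
  all: try by apply: (nbf A B C D); split; split.
  all: idtac.
case: (boolP [exists S in F, i \notin S]) => [/existsP[S0 /andP[S0F iS0]] | none].
  pose P := fun S => (S \in F) && (i \notin S).
  have PS0 : P S0 by rewrite /P S0F.
  case: (@arg_maxnP _ S0 P (fun S : {set 'I_n} => #|S|) PS0) => S /andP[SF iS] Smax.
  have jS : j \notin S by rewrite -(tw S SF).
  have smax : forall T, T \in F -> i \notin T -> S \subset T -> T = S.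
    move=> T TF iT ST; apply/eqP; rewrite eq_sym eqEcard ST /=.
    by have := Smax T; rewrite /P TF iT; apply.
  pose X := i |: S.
  have XF : X \notin F.
    apply/negP=> XF'; have := tw X XF'.
    by rewrite !inE eqxx /= (eq_sym j i) (negbTE ij) (negbTE jS).
  have F1 : forall T, T \in F -> (T \subset X) -> T \subset S.
    move=> T TF /subsetP TX; apply/subsetP=> x xT; have := TX x xT.
    rewrite /X in_setU1 => /orP[/eqP exi|//]; rewrite exi in xT.
    have jT : j \in T by rewrite -tw.
    by have := TX j jT; rewrite /X in_setU1 eq_sym (negbTE ij) /= (negbTE jS).
  have SX : S \subset X by apply: subsetUr.
  have G : forall T, T \in F -> S \subset T -> ~~ (X \subset T) -> ~~ (T \subset X) -> False.
    move=> T TF ST nXT nTX; case: (boolP (i \in T)) => iT.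
      by move: nXT; rewrite subUset sub1set iT ST.
    by move: nTX; rewrite (smax T TF iT ST) SX.
  apply: (key X XF).
    move=> C B D CF BF DF [_ [XB XD CB CD] [nXC nCX nBD nDB]].
    apply: (nbf S B C D); split; split=> //.
    - exact: subset_trans SX XB.
    - exact: subset_trans SX XD.
    - by apply/negP=> SC; apply: (G C CF SC nXC nCX).
    - by apply: contra nCX => CS; apply: subset_trans CS SX.
  move=> A C D AF CF DF [_ [AX AD CX CD] [nAC nCA nXD nDX]].
  apply: (nbf A S C D); split; split=> //; try by apply: F1.
  - by apply/negP=> SD; apply: (G D DF SD nXD nDX).
  - by apply: contra nDX => DS; apply: subset_trans DS SX.
have allI : forall S, S \in F -> i \in S.
  move=> S SF; apply: contraNT none => iS; apply/existsP; exists S; by rewrite SF iS.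
have [S0 S0F] : exists S0, S0 \in F.
  case: (set_0Vmem F) => [F0|[x xF]]; last by exists x.
  have := satX set0; rewrite F0 inE => /(_ isT) [A [B [C [D [[] ]]]]].
  rewrite setU0 !inE => /eqP-> _ /eqP-> _ _ [].
  by rewrite subxx.
case: (@arg_minnP _ S0 (mem F) (fun S : {set 'I_n} => #|S|) S0F) => Sm SF Smin.
have smin : forall T, T \in F -> T \subset Sm -> T = Sm.
  by move=> T TF TS; apply/eqP; rewrite eqEcard TS /=; apply: Smin.
pose X := Sm :\ i.
have iX : i \notin X by rewrite !inE eqxx.
have XF : X \notin F by apply: contra iX => /allI.
have XS : X \subset Sm by apply: subsetDl.
have up : forall T, T \in F -> X \subset T -> Sm \subset T.
  move=> T TF XT; rewrite -(setD1K (allI Sm SF)) subUset sub1set allI //.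
apply: (key X XF).
  move=> C B D CF BF DF [_ [XB XD CB CD] [nXC nCX nBD nDB]].
  apply: (nbf Sm B C D); split; split=> //; try by apply: up.
  - by apply: contra nXC => SC; apply: subset_trans XS SC.
  - by apply/negP=> CS; move: nXC; rewrite (smin C CF CS) XS.
move=> A C D AF CF DF [_ [AX _ _ _] _].
by move: iX; rewrite (subsetP AX) // allI.
Qed.

From mathcomp Require Import zify.

Lemma sat_card n (F : Defs.family n) : bfly_saturated F -> n <= 2 ^ #|F|.
Proof.
move=> sat; pose g (i : 'I_n) := F :&: [set S : {set 'I_n} | i \in S].
have ginj : injective g.
  move=> i j gij; apply/eqP; apply/negPn/negP=> ij.
  apply: (twin_lemma sat ij) => S SF.
  by have /setP/(_ S) := gij; rewrite !inE SF.
have e : #|g @: [set: 'I_n]| = n by rewrite card_imset // cardsT card_ord.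
rewrite -card_powerset -{1}e; apply: subset_leq_card; apply/subsetP=> T /imsetP[i _ ->].
by rewrite inE subsetIl.
Qed.

Lemma bigmin_seq_le (T : eqType) (r : seq T) (P : pred T) (g : T -> nat) d x :
  x \in r -> P x -> \big[minn/d]_(y <- r | P y) g y <= g x.
Proof.
elim: r => [//|y r IH]; rewrite inE big_cons => /orP[/eqP<- ->|xr Px].
  exact: geq_minl.
case: (P y); last exact: IH.
exact: leq_trans (geq_minr _ _) (IH xr Px).
Qed.

Lemma isat_le n (F : Defs.family n) : bfly_saturated F -> isat_bfly n <= #|F|.
Proof. by move=> sat; rewrite /isat_bfly; apply: bigmin_seq_le; rewrite ?mem_index_enum. Qed.

Lemma isat_ge n : up_log 2 n <= isat_bfly n.
Proof.
rewrite /isat_bfly; apply: (big_ind (fun m => up_log 2 n <= m)).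
- have h : up_log 2 n <= n by apply: up_log_min => //; apply: ltnW; apply: ltn_expl.
  by apply: (leq_trans h); apply: leqW; apply: ltnW; apply: ltn_expl.
- by move=> x y hx hy; rewrite leq_min hx hy.
- move=> F sat; apply: up_log_min => //; exact: sat_card.
Qed.

Definition seg n k : {set 'I_n} := [set i : 'I_n | i < k].
Definition F0 n : Defs.family n :=
  [set X : {set 'I_n} | #|X| <= 2] :|: [set seg n (k + 3) | k : 'I_(n - 2)].

Lemma card_seg n k : #|seg n k| <= k.
Proof.
rewrite cardE -(size_map val) -[k in _ <= k](size_iota 0).
apply: uniq_leq_size; first by rewrite (map_inj_uniq val_inj) enum_uniq.
by move=> x /mapP[i]; rewrite mem_enum inE => ik ->; rewrite mem_iota.
Qed.

Lemma seg_sub n a b : a <= b -> seg n a \subset seg n b.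
Proof. by move=> ab; apply/subsetP=> i; rewrite !inE => /leq_trans; apply. Qed.

Lemma small_top n (A B C D : {set 'I_n}) : #|B| <= 2 ->
  A \subset B -> C \subset B -> ~~ (A \subset C) -> ~~ (C \subset A) ->
  A \subset D -> C \subset D -> B \subset D.
Proof.
move=> cB AB CB /subsetPn[x xA xC] /subsetPn[y yC yA] AD CD.
have xy : x != y by apply: contraNneq xC => ->.
have -> : B = [set x; y].
  apply/eqP; rewrite eq_sym eqEcard cards2 xy (leq_trans cB) // andbT.
  by rewrite subUset !sub1set (subsetP AB) // (subsetP CB).
by rewrite subUset !sub1set (subsetP AD) // (subsetP CD).
Qed.

Lemma F0_free n A B C D : ~ bf (F0 n) A B C D.
Proof.
case=> -[_ FB _ FD] [AB AD CB CD] [nAC nCA nBD nDB].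
move: FB FD; rewrite !inE.
case/orP=> [cB _|/imsetP[k _ eB]].
  by move: nBD; rewrite (small_top cB AB CB nAC nCA AD CD).
case/orP=> [cD|/imsetP[l _ eD]].
  by move: nDB; rewrite (small_top cD AD CD nAC nCA AB CB).
subst; case: (leqP (k + 3) (l + 3)) => h.
  by move: nBD; rewrite seg_sub.
by move: nDB; rewrite seg_sub // ltnW.
Qed.

Lemma F0_sat n X : 3 <= n -> X \notin F0 n -> exists A B C D, bf (X |: F0 n) A B C D.
Proof.
move=> hn; rewrite !inE negb_or -ltnNge => /andP[cX nseg].
have [x0 x0X] : exists x0, x0 \in X.
  by apply/set0Pn; rewrite -card_gt0; apply: leq_trans cX.
case: (@arg_maxnP _ x0 (mem X) (fun i : 'I_n => val i) x0X) => M MX0 Mmax; have MX : M \in X := MX0.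
have : 1 < #|X :\ M| by move: cX; rewrite (cardsD1 M) MX.
case/card_gt1P=> a [b [aX bX ab]].
move: aX bX; rewrite !inE => /andP[aM aX] /andP[bM bX].
have ltM : forall c, c \in X -> c != M -> c < M.
  move=> c cXm cM; have h : (c : nat) <= M := Mmax c cXm.
  have : (c : nat) != M by apply: contra cM => /eqP/val_inj->.
  lia.
have aM' := ltM a aX aM; have bM' := ltM b bX bM.
have M2 : 2 <= M.
  have : (a : nat) != b by apply: contra ab => /eqP/val_inj->.
  lia.
have Mn : M < n by apply: ltn_ord.
exists [set a], X, [set b], (seg n M); split; split.
- by rewrite !inE cards1 orbT.
- by rewrite !inE eqxx.
- by rewrite !inE cards1 orbT.
- rewrite /F0 in_setU1 in_setU inE; case: (ltnP 2 M) => h.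
    apply/orP; right; apply/orP; right; apply/imsetP.
    have M3 : M - 3 < n - 2 by lia.
    by exists (Ordinal M3) => //; rewrite /seg /= subnK.
  by apply/orP; right; apply/orP; left; apply: leq_trans (card_seg _ _) _.
- by rewrite sub1set.
- by rewrite sub1set inE.
- by rewrite sub1set.
- by rewrite sub1set inE.
- by rewrite sub1set inE.
- by rewrite sub1set inE eq_sym.
- by apply/subsetPn; exists M => //; rewrite inE ltnn.
- apply/negP=> sMX; move/negP: nseg; apply; apply/imsetP.
  have Mn2 : M - 2 < n - 2 by lia.
  have e3 : M - 2 + 3 = M.+1 by lia.
  exists (Ordinal Mn2) => //=; apply/setP=> i; rewrite !inE e3.
  apply/idP/idP=> [iX|]; first by rewrite ltnS; apply: Mmax.
  rewrite ltnS leq_eqVlt => /orP[/eqP/val_inj->//|iM].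
  by apply: (subsetP sMX); rewrite inE.
Qed.

Lemma F0_saturated n : 3 <= n -> bfly_saturated (F0 n).
Proof.
move=> hn; apply/andP; split.
  by apply/negP=> /bflyP[A [B [C [D h]]]]; apply: (F0_free h).
apply/forallP=> F'; apply/implyP=> /properP[sub [X XF' XF]].
have [A [B [C [D [[FA FB FC FD] r1 r2]]]]] := F0_sat hn XF.
apply/bflyP; exists A, B, C, D; split=> //.
have s : X |: F0 n \subset F' by rewrite subUset sub1set XF' sub.
by split; apply: (subsetP s).
Qed.

Lemma F0_card n : 3 <= n -> #|F0 n| <= 'C(n, 2) + 2 * n - 1.
Proof.
move=> hn.
have h2 : #|[set seg n (k + 3) | k : 'I_(n - 2)]| <= n - 2.
  by apply: leq_trans (leq_imset_card _ _) _; rewrite card_ord.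
have h1 : #|[set X : {set 'I_n} | #|X| <= 2]| <= 1 + n + 'C(n, 2).
  have sub : [set X : {set 'I_n} | #|X| <= 2] \subset
     ([set X : {set 'I_n} | #|X| == 0] :|: [set X : {set 'I_n} | #|X| == 1])
       :|: [set X : {set 'I_n} | #|X| == 2].
    apply/subsetP=> X; rewrite !inE; case: #|X| => [|[|[|]]] //.
  apply: leq_trans (subset_leq_card sub) _.
  apply: leq_trans (leq_card_setU _ _) _.
  rewrite card_draws card_ord; apply: leq_add => //.
  by apply: leq_trans (leq_card_setU _ _) _; rewrite !card_draws card_ord bin0 bin1.
apply: leq_trans (leq_card_setU _ _) (leq_trans (leq_add h1 h2) _); lia.
Qed.

Theorem theorem1p7 (n : nat) (hn : 3 <= n) :
  up_log 2 n <= isat_bfly n <= 'C(n, 2) + 2 * n - 1.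
Proof.
rewrite isat_ge /=.
exact: leq_trans (isat_le (F0_saturated hn)) (F0_card hn).
Qed.
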